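(* Let $\mathcal{D}(\rho)=(1-p)\rho+pX\rho X$ be a bit-flip channel and $\mathcal{E}(\rho)=(1-q)\rho+qZ\rho Z$ a phase-flip channel, $p,q\in[0,1]$. The entanglement-assisted classical communication capacity over a quantum trajectory is $$C_{\text{E,Q}}=2+H(\alpha)+(1-p)(1-q)\log_2[(1-p)(1-q)]+p(1-q)\log_2[p(1-q)]+(1-p)q\log_2[(1-p)q]+pq\log_2(pq),$$ where $\alpha=1-pq$ and $H(\alpha)=-\alpha\log_2\alpha-(1-\alpha)\log_2(1-\alpha)$.
   Context: $X,Y,Z$ are Pauli matrices, $\sigma_0=I,\sigma_1=X,\sigma_2=Y,\sigma_3=Z$, $|\pm\rangle=(|0\rangle\pm|1\rangle)/\sqrt2$, $0\log_2 0=0$. For a Pauli channel $\mathcal{N}(\rho)=\sum_i r_i\sigma_i\rho\sigma_i$, the entanglement-assisted classical capacity (superdense coding, pre-shared EPR pair, equiprobable inputs) is $C_E(\mathcal{N})=2+\sum_i r_i\log_2 r_i$. Quantum trajectory: given Kraus operators $\{D_i\}$ of $\mathcal{D}$ and $\{E_j\}$ of $\mathcal{E}$ (here multiples of Pauli matrices), the switched channel on data $\rho$ and control $\omega=|+\rangle\langle+|$ is $\sum_{i,j}W_{i,j}(\rho\otimes\omega)W_{i,j}^\dagger$ with $W_{i,j}=E_jD_i\otimes|0\rangle\langle0|+D_iE_j\otimes|1\rangle\langle1|$. Its output has the form $p_+\mathcal{S}_+(\rho)\otimes|+\rangle\langle+|+p_-\mathcal{S}_-(\rho)\otimes|-\rangle\langle-|$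 (commuting Kraus pairs go to the $|+\rangle$ branch, anticommuting pairs to the $|-\rangle$ branch), with $\mathcal{S}_\pm$ normalized Pauli channels; the capacity is defined as $C_{\text{E,Q}}=p_+C_E(\mathcal{S}_+)+p_-C_E(\mathcal{S}_-)$. *)

(* Defs.v *)
From HB Require Import structures.
From mathcomp Require Import all_boot all_order all_algebra.
From mathcomp Require Import complex.
From mathcomp Require Import reals exp.
Set Implicit Arguments. Unset Strict Implicit. Unset Printing Implicit Defensive.
Import Order.TTheory GRing.Theory Num.Theory.
Local Open Scope ring_scope.
Local Open Scope complex_scope.

Section Defs.
Variable R : realType.

Definition xlog2x (x : R) : R := if x == 0 then 0 else x * (ln x / ln 2).

Definition Hbin (a : R) : R := - xlog2x a - xlog2x (1 - a).

(* Pauli matrices sigma_0 = I, sigma_1 = X, sigma_2 = Y, sigma_3 = Z over R[i] *)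
Definition pauli (k : 'I_4) : 'M[R[i]]_2 :=
  \matrix_(a < 2, b < 2)
    match val k with
    | 0%N => if a == b then 1 else 0
    | 1%N => if a == b then 0 else 1
    | 2%N => if a == b then 0 else (if val a == 0%N then - 'i else 'i)
    | _ => if a == b then (if val a == 0%N then 1 else -1) else 0
    end.

Definition phase (c : 'I_4) : R[i] := 'i ^+ val c.

(* a Pauli channel N(rho) = sum_k r_k sigma_k rho sigma_k is given by r : 'I_4 -> R *)
Definition CE (r : 'I_4 -> R) : R := 2 + \sum_(k < 4) xlog2x (r k).

(* the Kraus pair (D_i = sqrt(d_i) sigma_i, E_j = sqrt(e_j) sigma_j) commutes *)
Definition kcomm (i j : 'I_4) : bool := pauli i *m pauli j == pauli j *m pauli i.

Definition kprod (k i j : 'I_4) : bool :=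
  [exists c : 'I_4, pauli j *m pauli i == phase c *: pauli k].

(* weight of branch b (true = |+>, commuting pairs; false = |->, anticommuting) *)
Definition branch_p (d e : 'I_4 -> R) (b : bool) : R :=
  \sum_(i < 4) \sum_(j < 4 | kcomm i j == b) d i * e j.

Definition branch_S (d e : 'I_4 -> R) (b : bool) (k : 'I_4) : R :=
  (\sum_(i < 4) \sum_(j < 4 | (kcomm i j == b) && kprod k i j) d i * e j)
  / branch_p d e b.

Definition CEQ (d e : 'I_4 -> R) : R :=
  branch_p d e true * CE (branch_S d e true)
  + branch_p d e false * CE (branch_S d e false).

Definition bitflip (p : R) (k : 'I_4) : R :=
  if val k == 0%N then 1 - p else if val k == 1%N then p else 0.
Definition phaseflip (q : R) (k : 'I_4) : R :=
  if val k == 0%N then 1 - q else if val k == 3%N then q else 0.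

End Defs.

(* Main.v *)
Require Import Defs.
From HB Require Import structures.
From mathcomp Require Import all_boot all_order all_algebra.
From mathcomp Require Import complex.
From mathcomp Require Import reals exp.
From mathcomp Require Import ring lra.
Import Order.TTheory GRing.Theory Num.Theory.
Local Open Scope ring_scope.
Local Open Scope complex_scope.

Section M.
Variable R : realType.
Notation C := (R[i]).
Notation o0 := (@Ordinal 2 0 isT).
Notation o1 := (@Ordinal 2 1 isT).

Lemma mx2_eq (A B : 'M[C]_2) : A o0 o0 = B o0 o0 -> A o0 o1 = B o0 o1 ->
  A o1 o0 = B o1 o0 -> A o1 o1 = B o1 o1 -> A = B.
Proof.
move=> h00 h01 h10 h11; apply/matrixP => a b.
case: a => [[|[|//]] Ha]; case: b => [[|[|//]] Hb];
 by rewrite (bool_irrelevance Ha isT) (bool_irrelevance Hb isT).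
Qed.

Lemma mulmx2E (A B : 'M[C]_2) a b : (A *m B) a b = A a o0 * B o0 b + A a o1 * B o1 b.
Proof. by rewrite mxE !big_ord_recl big_ord0 addr0; congr (_ * _ + _ * _); congr (_ _ _); apply: val_inj. Qed.

Lemma i_neq0 : 'i != 0 :> C.
Proof. apply/eqP=> h; have := sqr_i R; rewrite h expr0n /= => /eqP; rewrite eq_sym oppr_eq0 oner_eq0. done. Qed.

Notation i0 := (@Ordinal 4 0 isT).
Notation i1 := (@Ordinal 4 1 isT).
Notation i2 := (@Ordinal 4 2 isT).
Notation i3 := (@Ordinal 4 3 isT).

Lemma ii : 'i * 'i = -1 :> C. Proof. by rewrite -expr2 sqr_i. Qed.
Lemma iix (x : C) : 'i * ('i * x) = - x. Proof. by rewrite mulrA ii mulN1r. Qed.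

Ltac csimp := rewrite /phase /= ?expr0 ?exprS ?expr0;
  rewrite ?(mulr0, mul0r, mulr1, mul1r, addr0, add0r, mulrN, mulNr, opprK, iix, ii, oppr0);
  rewrite ?(mulr0, mul0r, mulr1, mul1r, addr0, add0r, mulrN, mulNr, opprK, iix, ii, oppr0).

Lemma prod31 : pauli R i3 *m pauli R i1 = phase R i1 *: pauli R i2.
Proof.
by apply: mx2_eq; rewrite mulmx2E !mxE /=; csimp.
Qed.
Lemma prod13 : pauli R i1 *m pauli R i3 = phase R i3 *: pauli R i2.
Proof. by apply: mx2_eq; rewrite mulmx2E !mxE /=; csimp. Qed.
Lemma pauli0 : pauli R i0 = 1%:M.
Proof. by apply: mx2_eq; rewrite !mxE /=. Qed.


Definition fk (k : 'I_4) (M : 'M[C]_2) : C :=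
  match val k with
  | 0%N => M o0 o0 + M o1 o1 | 1%N => M o0 o1 + M o1 o0
  | 2%N => M o0 o1 - M o1 o0 | _ => M o0 o0 - M o1 o1 end.

Lemma fkZ k c M : fk k (c *: M) = c * fk k M.
Proof. case: k => [[|[|[|[|//]]]] Hk]; rewrite /fk /=. all: rewrite !mxE. all: by rewrite ?mulrBr ?mulrDr. Qed.

Lemma fk_pauli k k' : k != k' -> fk k (pauli R k') = 0.
Proof.
case: k => [[|[|[|[|//]]]] Hk]; case: k' => [[|[|[|[|//]]]] Hk'] //= _;
  rewrite /fk /= !mxE /=; csimp; rewrite ?subrr ?opprK ?addNr //.
Qed.

Lemma fk_pauli_nz k : fk k (pauli R k) != 0.
Proof.
case: k => [[|[|[|[|//]]]] Hk]; rewrite /fk /= !mxE /=; csimp;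
  rewrite -?opprD -mulr2n ?oppr_eq0 mulrn_eq0 /= ?oner_eq0 ?(negbTE i_neq0) //.
Qed.

Lemma pauli_inj c c' k k' : c != 0 -> c *: pauli R k = c' *: pauli R k' -> k = k'.
Proof.
move=> c0 E; apply/eqP; apply/negPn/negP => nk.
have := congr1 (fk k) E; rewrite !fkZ (@fk_pauli k k' nk) mulr0 => /eqP.
by rewrite mulf_eq0 (negbTE c0) (negbTE (fk_pauli_nz k)).
Qed.

Lemma phase_neq0 c : phase R c != 0.
Proof. by rewrite /phase expf_neq0 // i_neq0. Qed.

Lemma kprodE k i j k0 c : pauli R j *m pauli R i = phase R c *: pauli R k0 ->
  kprod R k i j = (k == k0).
Proof.
move=> E; apply/existsP/eqP => [[c' /eqP]|->]; last by exists c; rewrite E.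
rewrite E => /esym /pauli_inj; apply; exact: phase_neq0.
Qed.

Lemma kcomm0l j : kcomm R i0 j.
Proof. by rewrite /kcomm pauli0 mul1mx mulmx1. Qed.
Lemma kcomm0r j : kcomm R j i0.
Proof. by rewrite /kcomm pauli0 mul1mx mulmx1. Qed.
Lemma kcomm13 : kcomm R i1 i3 = false.
Proof.
apply/negbTE/negP; rewrite /kcomm prod31 prod13 => /eqP /(congr1 (fk i2)).
rewrite !fkZ => /mulIf; rewrite fk_pauli_nz => /(_ isT).
rewrite /phase /= !exprS expr0 !mulr1 iix => /eqP.
by rewrite -subr_eq0 -opprD -mulr2n oppr_eq0 mulrn_eq0 /= (negbTE i_neq0).
Qed.


Lemma kp00 k : kprod R k i0 i0 = (k == i0).
Proof. by apply: (@kprodE _ _ _ _ i0); rewrite pauli0 mulmx1 /phase expr0 scale1r. Qed.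
Lemma kp03 k : kprod R k i0 i3 = (k == i3).
Proof. by apply: (@kprodE _ _ _ _ i0); rewrite pauli0 mulmx1 /phase expr0 scale1r. Qed.
Lemma kp10 k : kprod R k i1 i0 = (k == i1).
Proof. by apply: (@kprodE _ _ _ _ i0); rewrite pauli0 mul1mx /phase expr0 scale1r. Qed.
Lemma kp13 k : kprod R k i1 i3 = (k == i2).
Proof. exact: (@kprodE _ _ _ _ i1 prod31). Qed.

Lemma sum4 (F : 'I_4 -> R) : \sum_(k<4) F k = F i0 + F i1 + F i2 + F i3.
Proof. rewrite !big_ord_recl big_ord0 addr0 !addrA; congr (F _ + F _ + F _ + F _); exact: val_inj. Qed.

Opaque kcomm kprod.
Lemma ifz (c : bool) : (if c then (0:R) else 0) = 0.
Proof. by case: c. Qed.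

Lemma sum_split (K : 'I_4 -> 'I_4 -> bool) (d e : 'I_4 -> R) :
  d i2 = 0 -> d i3 = 0 -> e i1 = 0 -> e i2 = 0 ->
  \sum_(i < 4) \sum_(j < 4 | K i j) d i * e j =
  (if K i0 i0 then d i0 * e i0 else 0) + (if K i0 i3 then d i0 * e i3 else 0)
  + (if K i1 i0 then d i1 * e i0 else 0) + (if K i1 i3 then d i1 * e i3 else 0).
Proof.
move=> d2 d3 e1 e2.
under eq_bigr do rewrite big_mkcond sum4; rewrite sum4.
rewrite d2 d3 e1 e2 !mulr0 !mul0r !ifz !addr0 ?add0r.
by rewrite !addrA.
Qed.

Lemma bp (p q : R) b : branch_p (bitflip p) (phaseflip q) b =
  if b then 1 - p * q else p * q.
Proof.
rewrite /branch_p (@sum_split (fun i j => kcomm R i j == b)) //.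
rewrite !kcomm0l !kcomm0r kcomm13 /bitflip /phaseflip /=.
by case: b => /=; ring.
Qed.

Lemma bnum (p q : R) b k :
  \sum_(i < 4) \sum_(j < 4 | (kcomm R i j == b) && kprod R k i j) bitflip p i * phaseflip q j =
  (if b then (if k == i0 then (1 - p) * (1 - q) else if k == i1 then p * (1 - q)
              else if k == i3 then (1 - p) * q else 0)
   else (if k == i2 then p * q else 0)).
Proof.
rewrite (@sum_split (fun i j => (kcomm R i j == b) && kprod R k i j)) //.
rewrite !kcomm0l !kcomm0r kcomm13 kp00 kp03 kp10 kp13 /bitflip /phaseflip /=.
by case: b; case: k => [[|[|[|[|//]]]] Hk] /=; ring.
Qed.

Lemma bS (p q : R) b k : branch_S (bitflip p) (phaseflip q) b k =
  (if b then (if k == i0 then (1 - p) * (1 - q) else if k == i1 then p * (1 - q)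
              else if k == i3 then (1 - p) * q else 0)
   else (if k == i2 then p * q else 0)) / (if b then 1 - p * q else p * q).
Proof. by rewrite /branch_S bnum bp. Qed.

Lemma xlog0 : xlog2x (0 : R) = 0.
Proof. by rewrite /xlog2x eqxx. Qed.
Lemma xlog1 : xlog2x (1 : R) = 0.
Proof. by rewrite /xlog2x oner_eq0 ln1 mul0r mulr0. Qed.
Lemma xlogE (x : R) : x != 0 -> xlog2x x = x * (ln x / ln 2).
Proof. by rewrite /xlog2x => /negbTE ->. Qed.
Lemma xlogpp (x : R) : xlog2x (x / x) = 0.
Proof.
have [->|x0] := eqVneq x 0; first by rewrite mul0r xlog0.
by rewrite divff // xlog1.
Qed.
Lemma xlogdiv (a al : R) : 0 < al -> 0 <= a ->
  al * xlog2x (a / al) = xlog2x a - a * (ln al / ln 2).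
Proof.
move=> al0; rewrite le0r => /orP [/eqP ->|a0]; first by rewrite mul0r xlog0 mulr0 mul0r subr0.
have al0' : al != 0 by rewrite gt_eqF.
rewrite !xlogE ?gt_eqF // ?divr_gt0 // ln_div ?posrE //.
field; rewrite al0' andbT gt_eqF // ln_gt0 //; lra.
Qed.
End M.
Local Close Scope complex_scope.

Theorem corollary2 (R : realType) (p q : R) :
  0 <= p <= 1 -> 0 <= q <= 1 ->
  let alpha := 1 - p * q in
  CEQ (bitflip p) (phaseflip q) =
    2 + Hbin alpha
      + xlog2x ((1 - p) * (1 - q)) + xlog2x (p * (1 - q))
      + xlog2x ((1 - p) * q) + xlog2x (p * q).
Proof.
move=> /andP [p0 p1] /andP [q0 q1] alpha.
rewrite /CEQ /CE !sum4 !bS !bp /=.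
rewrite !mul0r !xlog0 xlogpp /Hbin (_ : 1 - alpha = p * q); last by rewrite /alpha; ring.
rewrite /alpha.
have pq1 : p * q <= 1 by nra.
have [a0|apos] : 1 - p * q = 0 \/ 0 < 1 - p * q.
  by case: (ltrgtP 0 (1 - p * q)) => h; [right|lra|left].
- have hp : p = 1 by nra.
  have hq : q = 1 by nra.
  rewrite a0 invr0 !mulr0 !xlog0 hp hq !subrr !mul0r !mulr0 !mul1r xlog0 xlog1.
  lra.
- have ge1 : 0 <= (1 - p) * (1 - q) by apply: mulr_ge0; lra.
  have ge2 : 0 <= p * (1 - q) by apply: mulr_ge0; lra.
  have ge3 : 0 <= (1 - p) * q by apply: mulr_ge0; lra.
  have h1 := @xlogdiv _ _ _ apos ge1.
  have h2 := @xlogdiv _ _ _ apos ge2.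
  have h3 := @xlogdiv _ _ _ apos ge3.
  have h4 := @xlogE _ (1 - p * q) (lt0r_neq0 apos).
  move: h1 h2 h3 h4.
  move: (xlog2x ((1 - p) * (1 - q) / (1 - p * q))) => X1.
  move: (xlog2x (p * (1 - q) / (1 - p * q))) => X2.
  move: (xlog2x ((1 - p) * q / (1 - p * q))) => X3.
  move: (xlog2x (1 - p * q)) => Xa.
  move: (ln (1 - p * q) / ln 2) => L.
  move=> h1 h2 h3 ->.
  have -> : (1 - p * q) * (2 + (X1 + X2 + 0 + X3)) =
    2 * (1 - p * q) + (1 - p * q) * X1 + (1 - p * q) * X2 + (1 - p * q) * X3 by ring.
  rewrite h1 h2 h3; ring.
Qed.
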